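(* Let $r$ be an $\mathfrak s$-matrix on a pre-Lie algebra $(\mathfrak g,\cdot_{\mathfrak g})$. Then the map $\varrho:\mathfrak g^*\to\mathfrak{gl}(\mathfrak g)$, $\varrho(\alpha)(x)=[r^\sharp(\alpha),x]_{\mathfrak g}+r^\sharp(L^*_x\alpha)$, is a representation of the Lie algebra $(\mathfrak g^*,[\cdot,\cdot]_r)$ on $\mathfrak g$.
   Context: A pre-Lie algebra is a finite-dimensional vector space $\mathfrak g$ over a field of characteristic $0$ with product $\cdot$ satisfying $(x\cdot y)\cdot z-x\cdot(y\cdot z)=(y\cdot x)\cdot z-y\cdot(x\cdot z)$; $[x,y]_{\mathfrak g}=x\cdot y-y\cdot x$. Define $\langle L^*_x\alpha,y\rangle=-\langle\alpha,x\cdot y\rangle$. For $r\in\mathrm{Sym}^2(\mathfrak g)$, $\langle r^\sharp(\alpha),\beta\rangle=r(\alpha,\beta)$. For $r=\sum_ia_i\otimes b_i$, $[r,r]=-\sum_{i,j}a_i\cdot a_j\otimes b_i\otimes b_j+\sum_{i,j}a_i\otimes b_i\cdot a_j\otimes b_j+\sum_{i,j}a_i\otimes a_j\otimes[b_i,b_j]_{\mathfrak g}$; $r$ is an $\mathfrak s$-matrix if $r\in\mathrm{Sym}^2(\mathfrak g)$ and $[r,r]=0$. $[\alpha,\beta]_r=L^*_{r^\sharp(\alpha)}\beta-L^*_{r^\sharp(\beta)}\alpha$ (this is a Lie bracket on $\mathfrak g^*$ when $r$ is an $\mathfrak s$-matrix). *)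

(* Defs.v *)
(* g is modelled as F^n = 'rV[F]_n (finite-dimensional, basis e_i),
   g^* as 'rV[F]_n with the dual basis; pairing <alpha, x> = sum_i alpha_i x_i. *)
From HB Require Import structures.
From mathcomp Require Import all_boot all_order all_algebra.
Set Implicit Arguments. Unset Strict Implicit. Unset Printing Implicit Defensive.
Import Order.TTheory GRing.Theory Num.Theory.
Local Open Scope ring_scope.

Section Defs.
Variables (F : fieldType) (n : nat).
Notation V := 'rV[F]_n.

Definition ebas (i : 'I_n) : V := delta_mx 0 i.

Definition pairing (alpha x : V) : F := \sum_(i < n) alpha 0 i * x 0 i.

Definition is_bilinear (mul : V -> V -> V) : Prop :=
  (forall (a : F) (x y z : V), mul (a *: x + y) z = a *: mul x z + mul y z) /\
  (forall (a : F) (x y z : V), mul x (a *: y + z) = a *: mul x y + mul x z).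

Definition is_preLie (mul : V -> V -> V) : Prop :=
  forall x y z : V,
    mul (mul x y) z - mul x (mul y z) = mul (mul y x) z - mul y (mul x z).

Definition brg (mul : V -> V -> V) (x y : V) : V := mul x y - mul y x.

(* L^*_x alpha, defined by <L^*_x alpha, y> = - <alpha, x.y> *)
Definition Lstar (mul : V -> V -> V) (x alpha : V) : V :=
  \row_(j < n) - pairing alpha (mul x (ebas j)).

(* r in g (x) g given by coefficients: r = sum_{i,j} r i j e_i (x) e_j.
   r^sharp defined by <r^sharp(alpha), beta> = r(alpha, beta) = sum alpha_i r_ij beta_j. *)
Definition rsharp (r : 'M[F]_n) (alpha : V) : V := alpha *m r.

(* Coefficient at e_p (x) e_q (x) e_s of [r,r], where r = sum_{(i,j)} a_(i,j) (x) b_(i,j)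
   with a_(i,j) = r i j e_i and b_(i,j) = e_j. *)
Definition rr (mul : V -> V -> V) (r : 'M[F]_n) (p q s : 'I_n) : F :=
  - (\sum_(i < n) \sum_(j < n) \sum_(k < n) \sum_(l < n)
        (mul (r i j *: ebas i) (r k l *: ebas k)) 0 p * (ebas j) 0 q * (ebas l) 0 s)
  + (\sum_(i < n) \sum_(j < n) \sum_(k < n) \sum_(l < n)
        (r i j *: ebas i) 0 p * (mul (ebas j) (r k l *: ebas k)) 0 q * (ebas l) 0 s)
  + (\sum_(i < n) \sum_(j < n) \sum_(k < n) \sum_(l < n)
        (r i j *: ebas i) 0 p * (r k l *: ebas k) 0 q * (brg mul (ebas j) (ebas l)) 0 s).

Definition is_s_matrix (mul : V -> V -> V) (r : 'M[F]_n) : Prop :=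
  r^T = r /\ (forall p q s : 'I_n, rr mul r p q s = 0).

Definition brr (mul : V -> V -> V) (r : 'M[F]_n) (alpha beta : V) : V :=
  Lstar mul (rsharp r alpha) beta - Lstar mul (rsharp r beta) alpha.

Definition rho (mul : V -> V -> V) (r : 'M[F]_n) (alpha x : V) : V :=
  brg mul (rsharp r alpha) x + rsharp r (Lstar mul x alpha).

Definition is_representation (br : V -> V -> V) (rh : V -> V -> V) : Prop :=
  (forall (alpha : V) (c : F) (x y : V), rh alpha (c *: x + y) = c *: rh alpha x + rh alpha y) /\
  (forall (c : F) (alpha beta x : V), rh (c *: alpha + beta) x = c *: rh alpha x + rh beta x) /\
  (forall alpha beta x : V, rh (br alpha beta) x = rh alpha (rh beta x) - rh beta (rh alpha x)).

End Defs.

(* Main.v *)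
Require Import Defs.
From HB Require Import structures.
From mathcomp Require Import all_boot all_order all_algebra.
From mathcomp Require Import ring.
Import GRing.Theory.
Local Open Scope ring_scope.
Set Implicit Arguments. Unset Strict Implicit.

Section Lin.
Variables (F : fieldType) (n : nat).
Local Notation V := 'rV[F]_n.
Local Notation e := (ebas F).
Variable mul : V -> V -> V.
Hypothesis Hbil : is_bilinear mul.

Lemma mmL a x y z : mul (a *: x + y) z = a *: mul x z + mul y z.
Proof. exact: Hbil.1. Qed.
Lemma mmR a x y z : mul x (a *: y + z) = a *: mul x y + mul x z.
Proof. exact: Hbil.2. Qed.

Lemma mm0l z : mul 0 z = 0.
Proof.
have h := mmL 1 0 0 z; rewrite scale1r addr0 scale1r in h.
by apply: (@addrI _ (mul 0 z)); rewrite addr0 -h.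
Qed.
Lemma mm0r z : mul z 0 = 0.
Proof.
have h := mmR 1 z 0 0; rewrite scale1r addr0 scale1r in h.
by apply: (@addrI _ (mul z 0)); rewrite addr0 -h.
Qed.
Lemma mmDl x y z : mul (x + y) z = mul x z + mul y z.
Proof. by have := mmL 1 x y z; rewrite !scale1r. Qed.
Lemma mmDr x y z : mul z (x + y) = mul z x + mul z y.
Proof. by have := mmR 1 z x y; rewrite !scale1r. Qed.
Lemma mmZl a x z : mul (a *: x) z = a *: mul x z.
Proof. by have := mmL a x 0 z; rewrite mm0l !addr0. Qed.
Lemma mmZr a x z : mul z (a *: x) = a *: mul z x.
Proof. by have := mmR a z x 0; rewrite mm0r !addr0. Qed.
Lemma mmNl x z : mul (- x) z = - mul x z.
Proof. by rewrite -scaleN1r mmZl scaleN1r. Qed.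
Lemma mmNr x z : mul z (- x) = - mul z x.
Proof. by rewrite -scaleN1r mmZr scaleN1r. Qed.
Lemma mmBl x y z : mul (x - y) z = mul x z - mul y z.
Proof. by rewrite mmDl mmNl. Qed.
Lemma mmBr x y z : mul z (x - y) = mul z x - mul z y.
Proof. by rewrite mmDr mmNr. Qed.
Lemma mm_suml (f : 'I_n -> V) z : mul (\sum_i f i) z = \sum_i mul (f i) z.
Proof. by elim/big_rec2: _ => [|i a b _ <-]; [exact: mm0l | exact: mmDl]. Qed.
Lemma mm_sumr (f : 'I_n -> V) z : mul z (\sum_i f i) = \sum_i mul z (f i).
Proof. by elim/big_rec2: _ => [|i a b _ <-]; [exact: mm0r | exact: mmDr]. Qed.

Lemma brgL a x y z : brg mul (a *: x + y) z = a *: brg mul x z + brg mul y z.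
Proof.
rewrite /brg mmL mmR; apply/rowP => j; rewrite !mxE; ring.
Qed.
Lemma brgR a x y z : brg mul z (a *: x + y) = a *: brg mul z x + brg mul z y.
Proof.
rewrite /brg mmL mmR; apply/rowP => j; rewrite !mxE; ring.
Qed.
Lemma brgDr x y z : brg mul z (x + y) = brg mul z x + brg mul z y.
Proof. by have := brgR 1 x y z; rewrite !scale1r. Qed.
Lemma brgZl a x z : brg mul (a *: x) z = a *: brg mul x z.
Proof. by rewrite /brg mmZl mmZr scalerBr. Qed.
Lemma brgZr a x z : brg mul z (a *: x) = a *: brg mul z x.
Proof. by rewrite /brg mmZl mmZr scalerBr. Qed.
Lemma pairingE (a b : V) : pairing a b = \sum_i a 0 i * b 0 i.
Proof. by []. Qed.
Lemma pairingL c (x y z : V) : pairing (c *: x + y) z = c * pairing x z + pairing y z.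
Proof.
rewrite /pairing mulr_sumr -big_split /=; apply: eq_bigr => i _; rewrite !mxE; ring.
Qed.
Lemma pairingR c (x y z : V) : pairing z (c *: x + y) = c * pairing z x + pairing z y.
Proof.
rewrite /pairing mulr_sumr -big_split /=; apply: eq_bigr => i _; rewrite !mxE; ring.
Qed.
Lemma pairingBl (x y z : V) : pairing (x - y) z = pairing x z - pairing y z.
Proof. rewrite /pairing -sumrB /=; apply: eq_bigr => i _; rewrite !mxE; ring. Qed.
Lemma pairingBr (x y z : V) : pairing z (x - y) = pairing z x - pairing z y.
Proof. rewrite /pairing -sumrB /=; apply: eq_bigr => i _; rewrite !mxE; ring. Qed.
Lemma psym (a b : V) : pairing a b = pairing b a.
Proof. by apply: eq_bigr => i _; rewrite mulrC. Qed.

Lemma ebasE (i j : 'I_n) : (e i) 0 j = (j == i)%:R.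
Proof. by rewrite !mxE eqxx. Qed.

Lemma pairing_e (a : V) j : pairing a (e j) = a 0 j.
Proof.
rewrite /pairing (bigD1 j) //= big1 ?addr0 => [|i /negPf ij]; rewrite ebasE.
  by rewrite eqxx mulr1.
by rewrite ij mulr0.
Qed.

Lemma sum_delta (f : 'I_n -> F) s : \sum_l f l * (e l) 0 s = f s.
Proof.
rewrite (bigD1 s) //= big1 ?addr0 => [|i /negPf ij]; rewrite ebasE.
  by rewrite eqxx mulr1.
by rewrite eq_sym ij mulr0.
Qed.

Lemma sum_delta' (f : 'I_n -> F) s : \sum_l (e l) 0 s * f l = f s.
Proof. by rewrite -(sum_delta f s); apply: eq_bigr => i _; rewrite mulrC. Qed.

Lemma pair_ext (A B : V) : (forall z, pairing A z = pairing B z) -> A = B.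
Proof. by move=> h; apply/rowP => j; have := h (e j); rewrite !pairing_e. Qed.

Lemma lin_expand (f : V -> F) :
  (forall c x y, f (c *: x + y) = c * f x + f y) ->
  forall x, f x = \sum_j x 0 j * f (e j).
Proof.
move=> H x.
have f0 : f 0 = 0.
  have h := H 1 0 0; rewrite scale1r addr0 mul1r in h.
  by apply: (@addrI _ (f 0)); rewrite addr0 -h.
rewrite {1}(row_sum_delta x).
by elim/big_rec2: _ => [|i a b _ <-]; [exact: f0 | rewrite H].
Qed.

Lemma LstarE x a j : (Lstar mul x a) 0 j = - pairing a (mul x (e j)).
Proof. by rewrite /Lstar mxE. Qed.

Lemma Lpair x a y : pairing (Lstar mul x a) y = - pairing a (mul x y).
Proof.
rewrite (@lin_expand (fun y => pairing a (mul x y))); last first.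
  by move=> c u w; rewrite mmR pairingR.
rewrite pairingE -sumrN; apply: eq_bigr => j _; rewrite LstarE; ring.
Qed.

Lemma Lx_lin c x y a : Lstar mul (c *: x + y) a = c *: Lstar mul x a + Lstar mul y a.
Proof. apply/rowP => j; rewrite !mxE mmL pairingR; ring. Qed.
Lemma La_lin c x a b : Lstar mul x (c *: a + b) = c *: Lstar mul x a + Lstar mul x b.
Proof. apply/rowP => j; rewrite !mxE pairingL; ring. Qed.
Lemma LDl x y a : Lstar mul (x + y) a = Lstar mul x a + Lstar mul y a.
Proof. by have := Lx_lin 1 x y a; rewrite !scale1r. Qed.
Lemma LBr x a b : Lstar mul x (a - b) = Lstar mul x a - Lstar mul x b.
Proof. apply/rowP => j; rewrite !mxE pairingBl; ring. Qed.

End Lin.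
Unset Implicit Arguments. Set Strict Implicit.
Section Main.
Variables (F : fieldType) (n : nat).
Local Notation V := 'rV[F]_n.
Local Notation e := (ebas F).
Variable mul : V -> V -> V.
Hypothesis Hbil : is_bilinear mul.
Hypothesis Hpre : is_preLie mul.
Variable r : 'M[F]_n.
Hypothesis Hsym : r^T = r.
Hypothesis Hrr : forall p q s, rr mul r p q s = 0.
Let mmL' := @mmL _ _ _ Hbil.
Let mmR' := @mmR _ _ _ Hbil.
Let mm0l' := @mm0l _ _ _ Hbil.
Let mm0r' := @mm0r _ _ _ Hbil.
Let mmDl' := @mmDl _ _ _ Hbil.
Let mmDr' := @mmDr _ _ _ Hbil.
Let mmZl' := @mmZl _ _ _ Hbil.
Let mmZr' := @mmZr _ _ _ Hbil.
Let mmNl' := @mmNl _ _ _ Hbil.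
Let mmNr' := @mmNr _ _ _ Hbil.
Let mmBl' := @mmBl _ _ _ Hbil.
Let mmBr' := @mmBr _ _ _ Hbil.
Let mm_suml' := @mm_suml _ _ _ Hbil.
Let mm_sumr' := @mm_sumr _ _ _ Hbil.
Let brgL' := @brgL _ _ _ Hbil.
Let brgR' := @brgR _ _ _ Hbil.
Let brgDr' := @brgDr _ _ _ Hbil.
Let brgZl' := @brgZl _ _ _ Hbil.
Let brgZr' := @brgZr _ _ _ Hbil.
Let Lpair' := @Lpair _ _ _ Hbil.
Let Lx_lin' := @Lx_lin _ _ _ Hbil.
Let La_lin' := @La_lin _ _ mul.
Let LDl' := @LDl _ _ _ Hbil.
Let LBr' := @LBr _ _ mul.

Lemma brg_suml (f : 'I_n -> V) z : brg mul (\sum_i f i) z = \sum_i brg mul (f i) z.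
Proof. by rewrite /brg mm_suml' mm_sumr' -sumrB. Qed.
Lemma brg_sumr (f : 'I_n -> V) z : brg mul z (\sum_i f i) = \sum_i brg mul z (f i).
Proof. by rewrite /brg mm_suml' mm_sumr' -sumrB. Qed.

Lemma rsharpL c x y : rsharp r (c *: x + y) = c *: rsharp r x + rsharp r y.
Proof. by rewrite /rsharp mulmxDl scalemxAl. Qed.
Lemma rsharpD x y : rsharp r (x + y) = rsharp r x + rsharp r y.
Proof. by rewrite /rsharp mulmxDl. Qed.
Lemma rsharpB x y : rsharp r (x - y) = rsharp r x - rsharp r y.
Proof. by rewrite /rsharp mulmxBl. Qed.

Lemma pairing_mx (a b : V) : pairing a b = (a *m b^T) 0 0.
Proof. by rewrite /pairing !mxE; apply: eq_bigr => i _; rewrite mxE. Qed.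

Lemma rsym a b : pairing (rsharp r a) b = pairing a (rsharp r b).
Proof. by rewrite !pairing_mx /rsharp trmx_mul Hsym mulmxA. Qed.

Lemma Rcol q : rsharp r (e q) = \sum_i r i q *: e i.
Proof.
apply/rowP => k; rewrite summxE /rsharp mxE.
transitivity (r q k).
  rewrite (bigD1 q) //= big1 ?addr0 => [|i /negPf iq]; rewrite ebasE ?eqxx ?mul1r //.
  by rewrite iq mul0r.
rewrite (eq_bigr (fun i => r i q * e i 0 k)); last by move=> i _; rewrite mxE.
by rewrite sum_delta -{1}Hsym mxE.
Qed.

Lemma Rrow q : rsharp r (e q) = \sum_i r q i *: e i.
Proof.
rewrite Rcol; apply: eq_bigr => i _; by rewrite -{1}Hsym mxE.
Qed.

Lemma T1 p q s :
  \sum_(i < n) \sum_(j < n) \sum_(k < n) \sum_(l < n)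
        (mul (r i j *: e i) (r k l *: e k)) 0 p * (e j) 0 q * (e l) 0 s
  = (mul (rsharp r (e q)) (rsharp r (e s))) 0 p.
Proof.
rewrite !Rcol mm_suml' summxE; apply: eq_bigr => i _.
rewrite mm_sumr' summxE.
under eq_bigr => j _ do under eq_bigr => k _ do rewrite sum_delta.
under eq_bigr => j _ do rewrite -mulr_suml.
by rewrite sum_delta.
Qed.

Lemma T2 p q s :
  \sum_(i < n) \sum_(j < n) \sum_(k < n) \sum_(l < n)
        (r i j *: e i) 0 p * (mul (e j) (r k l *: e k)) 0 q * (e l) 0 s
  = (mul (rsharp r (e p)) (rsharp r (e s))) 0 q.
Proof.
rewrite Rrow Rcol mm_suml' summxE.
under eq_bigr => i _ do under eq_bigr => j _ do under eq_bigr => k _ do rewrite sum_delta.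
transitivity (\sum_i e i 0 p * \sum_j \sum_k r i j * (mul (e j) (r k s *: e k)) 0 q).
  apply: eq_bigr => i _; rewrite mulr_sumr; apply: eq_bigr => j _.
  rewrite mulr_sumr; apply: eq_bigr => k _; rewrite mxE; ring.
rewrite sum_delta'; apply: eq_bigr => j _.
rewrite mmZl' mm_sumr' mxE summxE mulr_sumr; apply: eq_bigr => k _.
by [].
Qed.

Lemma T3 p q s :
  \sum_(i < n) \sum_(j < n) \sum_(k < n) \sum_(l < n)
        (r i j *: e i) 0 p * (r k l *: e k) 0 q * (brg mul (e j) (e l)) 0 s
  = (brg mul (rsharp r (e p)) (rsharp r (e q))) 0 s.
Proof.
rewrite !Rrow brg_suml summxE.
transitivity (\sum_i e i 0 p * \sum_j r i j * \sum_k e k 0 q * \sum_l r k l * (brg mul (e j) (e l)) 0 s).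
  apply: eq_bigr => i _; rewrite mulr_sumr; apply: eq_bigr => j _.
  rewrite !mulr_sumr; apply: eq_bigr => k _.
  rewrite !mulr_sumr; apply: eq_bigr => l _; rewrite !mxE; ring.
rewrite sum_delta'; apply: eq_bigr => j _.
rewrite brgZl' brg_sumr mxE summxE; congr (_ * _).
rewrite sum_delta'; apply: eq_bigr => l _.
by rewrite brgZr' [RHS]mxE.
Qed.

Definition G a b c := pairing a (mul (rsharp r b) (rsharp r c)).
Definition K a b c := - G a b c + G b a c + pairing c (brg mul (rsharp r a) (rsharp r b)).

Lemma Kbasis p q s : K (e p) (e q) (e s) = rr mul r p q s.
Proof. by rewrite /rr T1 T2 T3 /K /G !(psym (e _)) !pairing_e. Qed.

Lemma Klin1 c x y b d : K (c *: x + y) b d = c * K x b d + K y b d.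
Proof. rewrite /K /G !rsharpL ?mmL' ?mmR' ?brgL' ?brgR' ?pairingL ?pairingR; ring. Qed.
Lemma Klin2 c x y a d : K a (c *: x + y) d = c * K a x d + K a y d.
Proof. rewrite /K /G !rsharpL ?mmL' ?mmR' ?brgL' ?brgR' ?pairingL ?pairingR; ring. Qed.
Lemma Klin3 c x y a b : K a b (c *: x + y) = c * K a b x + K a b y.
Proof. rewrite /K /G !rsharpL ?mmL' ?mmR' ?brgL' ?brgR' ?pairingL ?pairingR; ring. Qed.

Lemma K0 a b d : K a b d = 0.
Proof.
have h3 p q d' : K (e p) (e q) d' = 0.
  rewrite (@lin_expand _ _ (fun d => K (e p) (e q) d)); last by move=> ? ? ?; apply: Klin3.
  by apply: big1 => s _; rewrite Kbasis Hrr mulr0.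
have h2 p b' d' : K (e p) b' d' = 0.
  rewrite (@lin_expand _ _ (fun b => K (e p) b d')); last by move=> ? ? ?; apply: Klin2.
  by apply: big1 => q _; rewrite h3 mulr0.
rewrite (@lin_expand _ _ (fun a => K a b d)); last by move=> ? ? ?; apply: Klin1.
by apply: big1 => p _; rewrite h2 mulr0.
Qed.

Lemma Oop a b : brg mul (rsharp r a) (rsharp r b) = rsharp r (brr mul r a b).
Proof.
apply: pair_ext => z.
rewrite rsym /brr pairingBl !Lpair' (psym _ z).
have := K0 a b z; rewrite /K /G => h.
rewrite -[LHS]subr0 -h; ring.
Qed.

Lemma zhelp (A B C D : F) : A - C = B - D -> A - B = C - D.
Proof. move=> h; have -> : A = (A - C) + C by ring. rewrite h; ring. Qed.

Lemma Pl x y z : mul (brg mul x y) z = mul x (mul y z) - mul y (mul x z).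
Proof.
rewrite /brg mmBl'; apply/rowP => j.
have := congr1 (fun M : V => M 0 j) (Hpre x y z); rewrite /= !mxE => h.
exact: zhelp.
Qed.

Lemma Lrep x y a : Lstar mul (brg mul x y) a = Lstar mul x (Lstar mul y a) - Lstar mul y (Lstar mul x a).
Proof.
apply: pair_ext => z.
rewrite pairingBl !Lpair' Pl pairingBr; ring.
Qed.

Lemma Jac u v x : brg mul u (brg mul v x) - brg mul v (brg mul u x) = brg mul (brg mul u v) x.
Proof.
have Pl' y z w : mul (mul y z - mul z y) w = mul y (mul z w) - mul z (mul y w) by exact: Pl.
rewrite /brg !Pl' !mmBr'.
apply/rowP => j; rewrite !mxE; ring.
Qed.

Lemma rep : is_representation (brr mul r) (rho mul r).
Proof.
split; [|split].
- move=> a c x y; rewrite /rho brgR' Lx_lin' rsharpL.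
  by rewrite addrACA -scalerDr.
- move=> c a b x; rewrite /rho rsharpL brgL' La_lin' rsharpL.
  by rewrite addrACA -scalerDr.
move=> a b x; rewrite /rho.
rewrite (brgDr' (brg mul (rsharp r b) x) (rsharp r (Lstar mul x b)) (rsharp r a)).
rewrite (brgDr' (brg mul (rsharp r a) x) (rsharp r (Lstar mul x a)) (rsharp r b)).
rewrite (LDl' (brg mul (rsharp r b) x) (rsharp r (Lstar mul x b)) a).
rewrite (LDl' (brg mul (rsharp r a) x) (rsharp r (Lstar mul x a)) b).
rewrite (rsharpD (Lstar mul (brg mul (rsharp r b) x) a)).
rewrite (rsharpD (Lstar mul (brg mul (rsharp r a) x) b)).
rewrite (Oop a (Lstar mul x b)) (Oop b (Lstar mul x a)) -(Oop a b) /brr.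
rewrite (rsharpB (Lstar mul (rsharp r a) (Lstar mul x b))).
rewrite (rsharpB (Lstar mul (rsharp r b) (Lstar mul x a))).
rewrite (LBr' x (Lstar mul (rsharp r a) b)).
rewrite (rsharpB (Lstar mul x (Lstar mul (rsharp r a) b))).
rewrite (Lrep (rsharp r b) x a) (Lrep (rsharp r a) x b).
rewrite (rsharpB (Lstar mul (rsharp r b) (Lstar mul x a))).
rewrite (rsharpB (Lstar mul (rsharp r a) (Lstar mul x b))).
rewrite -(Jac (rsharp r a) (rsharp r b) x).
apply/rowP => j; rewrite !mxE; ring.
Qed.
End Main.

Theorem proposition4p3 (F : fieldType) (n : nat)
  (HF : [pchar F] =i pred0)
  (mul : 'rV[F]_n -> 'rV[F]_n -> 'rV[F]_n)
  (Hbil : is_bilinear mul) (Hpre : is_preLie mul)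
  (r : 'M[F]_n) (Hr : is_s_matrix mul r) :
  is_representation (brr mul r) (rho mul r).
Proof.
case: Hr => Hs Hrr; exact: (@rep F n mul Hbil Hpre r Hs Hrr).
Qed.
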